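(* Under the good event $E$, the quantity $\widehat\lambda:=\left\|\widehat P\widehat M^{1/2}(\widehat P^\top\widehat f^* )^{\circ-1/2}\right\|_\infty^2$ satisfies $\widehat\lambda\le8\lambda$.
   Context: Two-stage causal MDP. Start state $0$, intermediate states $[k]$, terminal state. At each state $i\in\{0,\dots,k\}$: independent Bernoulli variables $X^i_1,\dots,X^i_n$, $q^i_j=\mathbb{P}\{X^i_j=1\}$ unknown; atomic interventions $\mathcal{I}_i=\{do()\}\cup\{do(X^i_j=0),do(X^i_j=1):j\in[n]\}$, $N=2n+1$ ($do(X^i_j=x)$ sets $X^i_j=x$, other variables drawn independently). Performing $a\in\mathcal{I}_0$ at state $0$ leads to $i\in[k]$ with unknown probability $P_{(a,i)}$ (depending stochastically on the realized $X^0$-values); $P\in\mathbb{R}^{N\times k}$, $p_+=\min\{P_{(a,i)}>0\}$. At state $i\in[k]$, after an intervention all $X^i_j$ and a reward $R_i\in\{0,1\}$ (law depending on the $X^i$-values) are observed; $\mathbb{E}[R_i\mid a]$ is the expected reward under $a\in\mathcal{I}_i$. Causal parameters: with $\bar q^i_j=\min(q^i_j,1-q^i_j)$ sorted as $\bar q^i_{(1)}\le\dots\le\bar q^i_{(n)}$, $m_i=\max\{j:\bar q^i_{(j)}<1/j\}$; $\mathcal{I}_{m_i}$ is the set of interventions setting a variable with $\bar q^i_{(j)}<1/j$ to its less likely value; $M=\mathrm{diag}(m_1,\dots,m_k)$. Frequency vectors: $f\in\mathbb{R}^N$, $f\ge0$, $\sum f_a=1$; $x^{\circ-1/2}$ is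 entrywise $x_i^{-1/2}$; $\lambda=\min_f\|PM^{1/2}(P^\top f)^{\circ-1/2}\|_\infty^2$. Algorithm ALG-CE with budget $T$ (estimates are empirical frequencies/means). Phase 1 ($T/3$ rounds): $T/6$ rounds of $do()$ at state $0$, giving estimates of $q^0_j$, $\widehat m_0$, $\mathcal{I}_{m_0}$, and $\widehat P_{(a,i)}$ for $a\notin\mathcal{I}_{m_0}$ (frequency of reaching $i$ among rounds whose $X^0$-values agree with $a$); then each $a\in\mathcal{I}_{m_0}$ is performed $T/(6|\mathcal{I}_{m_0}|)$ times to get $\widehat P_{(a,i)}$. Phase 2: $\tilde f\in\arg\max_f\min_i(\widehat P^\top f)_i$. Phase 3 ($T/3$ rounds): each $a\in\mathcal{I}_0$ performed $\frac12(\tilde f(a)+\frac1N)\frac T3$ times with $do()$ at the reached state, giving $\widehat m_i$, $\widehat M=\mathrm{diag}(\widehat m_1,\dots,\widehat m_k)$. Phase 4: $\widehat f^*\in\arg\min_f\|\widehat P\widehat M^{1/2}(\widehat P^\top f)^{\circ-1/2}\|_\infty$. Phase 5 ($T/3$ rounds): with $h(a)=\frac13(\widehat f^*(a)+\tilde f(a)+\frac1N)$, each $a$ performed $h(a)T/6$ times with $do()$ at the reached state (estimating $\mathcal{I}_{m_i}$ and $\widehat{\mathcal{R}}_{(b,i)}$ for $b\notin\mathcal{I}_{m_i}$ from rounds whose $X^i$-values agree with $b$), then $h(a)T/6$ times with round-robin over $b\in\mathcal{I}_{m_i}$ at the reached state $i$ (estimating $\widehat{\mathcal{R}}_{(b,i)}$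 for $b\in\mathcal{I}_{m_i}$). Output $\widehat\pi(i)\in\arg\max_b\widehat{\mathcal{R}}_{(b,i)}$, $\widehat\pi(0)\in\arg\max_a\sum_i\widehat P_{(a,i)}\widehat{\mathcal{R}}_{(\widehat\pi(i),i)}$. Good event $E=E_1\cap\dots\cap E_5$: ($E_1$) for every $a\in\mathcal{I}_0$, the transition estimates formed in each of Phases 1, 3, 5 satisfy $\sum_i|\widehat P_{(a,i)}-P_{(a,i)}|\le p_+/3$; ($E_2$) $\widehat m_0\in[\frac23m_0,2m_0]$; ($E_3$) $\widehat m_i\in[\frac23m_i,2m_i]$ for all $i\in[k]$ (for the estimates in Phases 3 and 5); ($E_4$) for all $a\in\mathcal{I}_0$, the Phase 1 estimates satisfy $\sum_i|\widehat P_{(a,i)}-P_{(a,i)}|\le\eta'$ with $\eta'=\sqrt{\frac{150m_0}{Tp_+}\log\frac{3T}{k}}$; ($E_5$) $|\mathbb{E}[R_i\mid a]-\widehat{\mathcal{R}}_{(a,i)}|\le\widehat\eta_i$ for all $i\in[k]$, $a\in\mathcal{I}_i$, with $\widehat\eta_i=\sqrt{\frac{27\widehat m_i}{T(\widehat P^\top\widehat f^* )_i}\log(2TN)}$. Here $\widehat P$ and $\widehat M$ denote the Phase 1 and Phase 3 estimates. *)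

(* Defs.v *)
From mathcomp Require Import all_boot all_order all_algebra.
From mathcomp Require Import classical_sets reals.
Set Implicit Arguments. Unset Strict Implicit. Unset Printing Implicit Defensive.
Import Order.TTheory GRing.Theory Num.Theory.
Local Open Scope ring_scope.
Local Open Scope classical_set_scope.

Section Defs.
Variable R : realType.

(* Causal parameter m(q) for n independent Bernoulli variables with
   P{X_j = 1} = q j:  qbar_j = min(q_j, 1 - q_j) sorted increasingly as
   qbar_(1) <= ... <= qbar_(n), and m = max{ j : qbar_(j) < 1/j }
   (with the convention max of the empty set = 0; never happens for n >= 1
   since qbar_(1) <= 1/2 < 1). *)
Definition qbar (n : nat) (q : 'I_n -> R) (j : 'I_n) : R :=
  Num.min (q j) (1 - q j).

Definition qbar_sorted (n : nat) (q : 'I_n -> R) : seq R :=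
  sort <=%R [seq qbar q j | j <- enum 'I_n].

Definition causal_m (n : nat) (q : 'I_n -> R) : nat :=
  \max_(j < n | nth 0 (qbar_sorted q) j < (j.+1%:R)^-1) j.+1.

(* p_+ = min { P(a,i) : P(a,i) > 0 } (the default 1 is irrelevant when P is
   row-stochastic, as every entry is <= 1 and some entry is positive). *)
Definition pplus (N k : nat) (P : 'M[R]_(N, k)) : R :=
  \big[Num.min/1]_(a < N) \big[Num.min/1]_(i < k | 0 < P a i) P a i.

Definition freq_vector (N : nat) (f : 'I_N -> R) : Prop :=
  (forall a, 0 <= f a) /\ \sum_(a < N) f a = 1.

Definition coverage (N k : nat) (P : 'M[R]_(N, k)) (f : 'I_N -> R) (i : 'I_k) : R :=
  \sum_(a < N) f a * P a i.

(* f is feasible for P when the vector P M^{1/2} (P^T f)^{o -1/2} is finite,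
   i.e. (P^T f)_i > 0 whenever some P(a,i) > 0 (convention 0 * oo = 0). *)
Definition feasible (N k : nat) (P : 'M[R]_(N, k)) (f : 'I_N -> R) : Prop :=
  forall a i, P a i != 0 -> 0 < coverage P f i.

Definition objective (N k : nat) (P : 'M[R]_(N, k)) (m : 'I_k -> nat)
    (f : 'I_N -> R) : R :=
  \big[Num.max/0]_(a < N)
     `| \sum_(i < k) P a i * Num.sqrt (m i)%:R / Num.sqrt (coverage P f i) |.

(* lambda = min_f || P M^{1/2} (P^T f)^{o -1/2} ||_oo^2 ; infeasible f give
   value +oo, so the minimum is the infimum over feasible frequency vectors. *)
Definition lambda_opt (N k : nat) (P : 'M[R]_(N, k)) (m : 'I_k -> nat) : R :=
  inf [set objective P m f ^+ 2 | f in [set f | freq_vector f /\ feasible P f]].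

End Defs.

(* Main.v *)
Require Import Defs.
From mathcomp Require Import all_boot all_order all_algebra.
From mathcomp Require Import classical_sets reals.
From mathcomp Require Import ring lra.
Import Order.TTheory GRing.Theory Num.Theory.
Local Open Scope ring_scope.

Lemma key (R : realType) (s v u t : R) : 0 <= s -> 0 <= v -> 0 <= u -> 0 <= t ->
  s^+2 * v^+2 <= 3 * (u^+2 * t^+2) -> s * v <= 15/8 * u * t.
Proof.
move=> s0 v0 u0 t0 h.
rewrite -ler_sqr ?nnegrE; first last.
- by rewrite !mulr_ge0 //; lra.
- exact: mulr_ge0.
rewrite !exprMn; apply: le_trans h _.
have : 0 <= u^+2 * t^+2 by rewrite mulr_ge0 // sqr_ge0.
nra.
Qed.

Lemma term_bound (R : realType) (p ph mh m ch cp : R) :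
  0 <= p -> 0 <= ph -> (p = 0 -> ph = 0) -> ph <= 4/3 * p ->
  0 <= m -> 0 <= mh -> mh <= 2 * m -> (0 < p -> 0 < cp) -> (0 < p -> 2/3 * cp <= ch) ->
  ph * Num.sqrt mh / Num.sqrt ch <= 5/2 * (p * Num.sqrt m / Num.sqrt cp).
Proof.
move=> p0 ph0 hz hph m0 mh0 hm hcp hch.
have [pz|pn0] := eqVneq p 0.
  by rewrite (hz pz) pz !mul0r mulr0.
have pp : 0 < p by rewrite lt_def pn0.
have cpp := hcp pp; have chc := hch pp.
have chp : 0 < ch by lra.
set s := Num.sqrt mh; set t := Num.sqrt ch; set u := Num.sqrt m; set v := Num.sqrt cp.
have tp : 0 < t by rewrite sqrtr_gt0.
have vp : 0 < v by rewrite sqrtr_gt0.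
have s0 : 0 <= s by exact: sqrtr_ge0.
have u0 : 0 <= u by exact: sqrtr_ge0.
have hk : s * v <= 15/8 * u * t.
  have cp0 : 0 <= cp by exact: ltW.
  have ch0 : 0 <= ch by exact: ltW.
  apply: key => //; try exact: ltW.
  rewrite /s /t /u /v !sqr_sqrtr //.
  have : mh * cp <= 2 * m * cp by rewrite ler_wpM2r // ltW.
  have : 2 * m * cp <= 3 * (m * ch).
    have : m * (2/3 * cp) <= m * ch by rewrite ler_wpM2l.
    lra.
  lra.
have hst : s / t <= 15/8 * (u / v).
  rewrite ler_pdivrMr //.
  have -> : 15/8 * (u/v) * t = (15/8 * u * t) / v by field; rewrite gt_eqF.
  by rewrite ler_pdivlMr.
have -> : ph * s / t = ph * (s / t) by rewrite mulrA.
have -> : 5/2 * (p * u / v) = (4/3 * p) * (15/8 * (u/v)) by field; rewrite gt_eqF.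
apply: ler_pM => //.
by apply: divr_ge0 => //; exact: ltW.
Qed.

Theorem lemma3 (R : realType) (n k : nat)
    (P Phat : 'M[R]_((2 * n).+1, k))
    (q qhat : 'I_k -> 'I_n -> R)
    (fstar : 'I_(2 * n).+1 -> R) :
  (* P is a transition matrix from state 0 to the states in [k] *)
  (forall a i, 0 <= P a i) ->
  (forall a, \sum_(i < k) P a i = 1) ->
  (* Phat: empirical transition frequencies (Phase 1) *)
  (forall a i, 0 <= Phat a i) ->
  (forall a i, P a i = 0 -> Phat a i = 0) ->
  (* q^i_j true probabilities, qhat^i_j empirical (Phase 3) frequencies *)
  (forall i j, 0 <= q i j <= 1) ->
  (forall i j, 0 <= qhat i j <= 1) ->
  (* E_1 (Phase 1 estimates) *)
  (forall a, \sum_(i < k) `|Phat a i - P a i| <= pplus P / 3%:R) ->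
  (* E_3 (Phase 3 estimates): mhat_i in [2/3 m_i, 2 m_i] *)
  (forall i, (2%:R / 3%:R) * (causal_m (q i))%:R <= (causal_m (qhat i))%:R :> R /\
             (causal_m (qhat i))%:R <= 2%:R * (causal_m (q i))%:R :> R) ->
  (* Phase 4: fhat* minimizes || Phat Mhat^{1/2} (Phat^T f)^{o -1/2} ||_oo *)
  freq_vector fstar -> feasible Phat fstar ->
  (forall f, freq_vector f -> feasible Phat f ->
     objective Phat (fun i => causal_m (qhat i)) fstar
       <= objective Phat (fun i => causal_m (qhat i)) f) ->
  objective Phat (fun i => causal_m (qhat i)) fstar ^+ 2
    <= 8%:R * lambda_opt P (fun i => causal_m (q i)).
Proof.
move=> HP0 HPsum Hh0 Hz Hq Hqh HE1 HE3 Hfs Hff Hmin.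
have Hph : forall a i, 0 < P a i -> 2/3 * P a i <= Phat a i /\ Phat a i <= 4/3 * P a i.
  move=> a i Pp.
  have h1 : `|Phat a i - P a i| <= P a i / 3.
    apply: le_trans (le_trans _ (HE1 a)) _.
      rewrite (bigD1 i) //= lerDl; apply: sumr_ge0 => j _; exact: normr_ge0.
    rewrite ler_wpM2r // ?invr_ge0 ?ler0n //.
    rewrite /pplus; apply: le_trans (bigmin_le 1 a (fun a0 => \big[Num.min/1]_(i0 < k | 0 < P a0 i0) P a0 i0)) _ => /=.
    exact: (bigmin_le_cond 1 (fun i0 => P a i0) Pp).
  move: h1; rewrite ler_norml => /andP [h2 h3].
  split; lra.
have Hph' : forall a i, Phat a i <= 4/3 * P a i.
  move=> a i; have [Pz|Pn] := eqVneq (P a i) 0.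
    by rewrite (Hz _ _ Pz) Pz mulr0.
  have Pp : 0 < P a i by rewrite lt_def Pn HP0.
  by case: (Hph a i Pp).
have Hcov : forall f, freq_vector f -> forall i, 2/3 * coverage P f i <= coverage Phat f i.
  move=> f [Hf0 _] i; rewrite /coverage mulr_sumr; apply: ler_sum => a _.
  have [Pz|Pn] := eqVneq (P a i) 0.
    by rewrite (Hz _ _ Pz) Pz !mulr0.
  have Pp : 0 < P a i by rewrite lt_def Pn HP0.
  have [h _] := Hph a i Pp.
  rewrite mulrCA; exact: ler_wpM2l.
have Hfeas : forall f, freq_vector f -> feasible P f -> feasible Phat f.
  move=> f Hf Hfe a i Hn.
  have Pn : P a i != 0.
    by apply/eqP => h; move: Hn; rewrite (Hz _ _ h) eqxx.
  have := Hfe a i Pn; have := Hcov f Hf i; lra.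
have Hbound : forall f, freq_vector f -> feasible P f ->
    objective Phat (fun i => causal_m (qhat i)) f <=
    5/2 * objective P (fun i => causal_m (q i)) f.
  move=> f Hf Hfe; rewrite /objective; apply: bigmax_le.
    by apply: mulr_ge0; [lra | exact: bigmax_ge_id].
  move=> a _.
  apply: (@le_trans _ _ (5/2 * `|\sum_(i < k) P a i * Num.sqrt (causal_m (q i))%:R /
           Num.sqrt (coverage P f i)|)); last first.
    by rewrite ler_wpM2l //; [lra | exact: le_bigmax].
  rewrite !ger0_norm; first last.
  - apply: sumr_ge0 => i _; apply: divr_ge0; [apply: mulr_ge0 => // |]; exact: sqrtr_ge0.
  - apply: sumr_ge0 => i _; apply: divr_ge0; [apply: mulr_ge0 => // |]; exact: sqrtr_ge0.
  rewrite mulr_sumr; apply: ler_sum => i _.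
  have [hm1 hm2] := HE3 i.
  apply: term_bound => //.
  - exact: Hz.
  - by move=> Pp; apply: (Hfe a i); rewrite (gt_eqF Pp).
  - by move=> _; apply: Hcov.
have Hobj0 : forall (P0 : 'M[R]_((2 * n).+1, k)) m f, 0 <= objective P0 m f.
  by move=> P0 m f; exact: bigmax_ge_id.
rewrite mulrC -ler_pdivrMr; last by rewrite ltr0n.
apply: lb_le_inf.
  pose u := fun _ : 'I_(2 * n).+1 => ((2 * n).+1%:R : R)^-1.
  have Hu : freq_vector u.
    split; first by move=> a; rewrite /u invr_ge0 ler0n.
    have hN : ((2*n).+1%:R : R) != 0 by rewrite pnatr_eq0.
    by rewrite /u sumr_const card_ord -(mulr_natl (_^-1)) mulfV.
  have Hue : feasible P u.
    move=> a i Pn; rewrite /coverage (bigD1 a) //=.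
    apply: (@lt_le_trans _ _ (u a * P a i)).
      apply: mulr_gt0; first by rewrite /u invr_gt0 ltr0n.
      by rewrite lt_def Pn HP0.
    rewrite lerDl; apply: sumr_ge0 => b _; apply: mulr_ge0 => //.
    by rewrite /u invr_ge0 ler0n.
  by exists (objective P (fun i => causal_m (q i)) u ^+ 2); exists u.
move=> y [f [Hf Hfe] <-].
set X := objective _ _ fstar.
set Y := objective _ _ f.
have hX : X <= 5/2 * Y.
  apply: le_trans (Hmin f Hf (Hfeas f Hf Hfe)) _; exact: Hbound.
have X0 : 0 <= X by exact: Hobj0.
have Y0 : 0 <= Y by exact: Hobj0.
have hp : 0 <= (5/2 * Y - X) * (5/2 * Y + X).
  apply: mulr_ge0; lra.
rewrite ler_pdivrMr; last by rewrite ltr0n.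
nra.
Qed.
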